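(* Let $A$ be a finitely generated associative $\mathbb{C}$-algebra which is NC-nilpotent, let $\pi:A\to A/M_2(A)$ be the quotient map, let $\bar S\subset A/M_2(A)$ be a finitely generated multiplicative set without zero divisors, and let $S=\pi^{-1}(\bar S)$. Then (1) $S$ satisfies the Ore condition; (2) the Ore localization $A[S^{-1}]$ is finitely generated; (3) $A[S^{-1}]$ is NC-nilpotent.
   Context: $L_1=A$, $L_k=[A,L_{k-1}]$, $M_k=AL_kA$. An algebra is NC-nilpotent if its NC-filtration $F_k=\sum_{m\ge1}\sum_{i_1+\cdots+i_m=k+m}M_{i_1}\cdots M_{i_m}$ satisfies $F_N=0$ for some $N$; for finitely generated algebras this is equivalent to $M_N=0$ for some $N$. *)

(* Defs.v *)
From HB Require Import structures.
From mathcomp Require Import all_boot all_order all_algebra.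
From mathcomp Require Import Rstruct complex.
Set Implicit Arguments.
Unset Strict Implicit.
Unset Printing Implicit Defensive.
Import GRing.Theory.
Local Open Scope ring_scope.

Definition CC : fieldType := complex Rdefinitions.R.

Section NCDefs.
Variable A : algType CC.

Inductive span (P : A -> Prop) : A -> Prop :=
| span0 : span P 0
| span_base x : P x -> span P x
| spanD x y : span P x -> span P y -> span P (x + y)
| spanZ (c : CC) x : span P x -> span P (c *: x).

(* L_1 = A, L_k = [A, L_{k-1}] (span of commutators); L_0 is unused. *)
Fixpoint Lser (k : nat) : A -> Prop :=
  match k with
  | 0 => fun _ => True
  | 1 => fun _ => True
  | k'.+1 => span (fun x => exists a l, Lser k' l /\ x = a * l - l * a)
  end.

Definition Mser (k : nat) : A -> Prop :=
  span (fun x => exists a l b, Lser k l /\ x = a * l * b).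

(* NC-filtration: F_k = sum_{m>=1} sum_{i_1+..+i_m = k+m} M_{i_1} ... M_{i_m},
   with all i_j >= 1.  A product of subspaces is the span of the products. *)
Definition NCfil (k : nat) : A -> Prop :=
  span (fun x => exists s : seq (nat * A),
           (0 < size s)%N /\
           all (fun p => 0 < p.1)%N s /\
           sumn (map fst s) = (k + size s)%N /\
           (forall p, p \in s -> Mser p.1 p.2) /\
           x = \prod_(p <- s) p.2).

Definition NC_nilpotent : Prop := exists N : nat, forall x, NCfil N x -> x = 0.

Definition fin_gen_alg : Prop :=
  exists gens : seq A, forall x,
    span (fun y => exists w : seq A, {subset w <= gens} /\ y = \prod_(g <- w) g) x.

Definition right_ore (S : A -> Prop) : Prop :=
  forall a s, S s -> exists b t, S t /\ a * t = s * b.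
Definition left_ore (S : A -> Prop) : Prop :=
  forall a s, S s -> exists b t, S t /\ t * a = b * s.

End NCDefs.

Definition invertible (R : pzRingType) (x : R) : Prop :=
  exists y, x * y = 1 /\ y * x = 1.

Definition is_localization (A B : algType CC) (S : A -> Prop)
    (phi : {lrmorphism A -> B}) : Prop :=
  (forall s, S s -> invertible (phi s)) /\
  forall (C : algType CC) (f : {lrmorphism A -> C}),
    (forall s, S s -> invertible (f s)) ->
    (exists g : {lrmorphism B -> C}, forall a, g (phi a) = f a) /\
    (forall g1 g2 : {lrmorphism B -> C},
        (forall a, g1 (phi a) = f a) -> (forall a, g2 (phi a) = f a) ->
        forall b, g1 b = g2 b).

(* Main.v *)
Require Import Defs.
From HB Require Import structures.
From mathcomp Require Import all_boot all_order all_algebra zify.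
From Stdlib Require Import ClassicalEpsilon.
Set Implicit Arguments.
Unset Strict Implicit.
Unset Printing Implicit Defensive.
Import GRing.Theory.
Local Open Scope ring_scope.
Local Notation span := Defs.span.

Section AdRing.
Variable R : pzRingType.
Implicit Types s x y : R.

Definition ad s x := s * x - x * s.

Lemma adD s x y : ad s (x + y) = ad s x + ad s y.
Proof. rewrite /ad mulrDr mulrDl; rewrite opprD !addrA; congr (_ + _); rewrite -!addrA; congr (_ + _); exact: addrC. Qed.

Lemma adN s x : ad s (- x) = - ad s x.
Proof. by rewrite /ad mulrN mulNr opprB opprK addrC. Qed.

Lemma adB s x y : ad s (x - y) = ad s x - ad s y.
Proof. by rewrite adD adN. Qed.

Lemma ad0 s : ad s 0 = 0.
Proof. by rewrite /ad mulr0 mul0r subrr. Qed.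

Lemma iter_ad0 s n : iter n (ad s) 0 = 0.
Proof. by elim: n => //= n ->; rewrite ad0. Qed.

Lemma iter_adB s n x y : iter n (ad s) (x - y) = iter n (ad s) x - iter n (ad s) y.
Proof. by elim: n => //= n ->; rewrite adB. Qed.

Lemma ad_Ml s y : s * ad s y = ad s (s * y).
Proof. by rewrite /ad mulrBr !mulrA. Qed.

Fixpoint Dr s n x := if n is n'.+1 then x * s ^+ n' - Dr s n' (ad s x) else 0.
Fixpoint Dl s n x := if n is n'.+1 then s ^+ n' * x + Dl s n' (ad s x) else 0.

Lemma Dr_spec s n x : iter n (ad s) x = 0 -> x * s ^+ n = s * Dr s n x.
Proof.
elim: n x => [|n IH] x H; first by rewrite /= in H; rewrite H mul0r mulr0.
rewrite iterSr in H; rewrite /= exprS mulrA.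
have -> : x * s = s * x - ad s x by rewrite /ad opprB addrC subrK.
by rewrite mulrBl (IH _ H) -mulrA mulrBr.
Qed.

Lemma Dl_spec s n x : iter n (ad s) x = 0 -> s ^+ n * x = Dl s n x * s.
Proof.
elim: n x => [|n IH] x H; first by rewrite /= in H; rewrite H mul0r mulr0.
rewrite iterSr in H; rewrite /= exprSr -mulrA.
have -> : s * x = x * s + ad s x by rewrite /ad addrC subrK.
by rewrite mulrDr (IH _ H) !mulrA mulrDl.
Qed.

Lemma rev_spec s n y : s * y = 0 -> iter n (ad s) y = 0 -> y * s ^+ n = 0.
Proof.
elim: n y => [|n IH] y H0 H; first by rewrite /= in H; rewrite H mul0r.
rewrite iterSr in H; rewrite exprS mulrA.
have -> : y * s = s * y - ad s y by rewrite /ad opprB addrC subrK.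
rewrite H0 sub0r mulNr (IH (ad s y)) ?oppr0 //.
by rewrite ad_Ml H0 ad0.
Qed.

End AdRing.

Section SpanLemmas.
Variable A : algType CC.
Implicit Types P Q : A -> Prop.

Lemma span_sub P Q : (forall x, P x -> span Q x) -> forall x, span P x -> span Q x.
Proof.
move=> H x; elim=> [|y /H //|y z _ Hy _ Hz|c y _ Hy]; first exact: span0.
  exact: spanD.
exact: spanZ.
Qed.

Lemma spanN P x : span P x -> span P (- x).
Proof. by move=> H; rewrite -scaleN1r; apply: spanZ. Qed.

Lemma spanB P x y : span P x -> span P y -> span P (x - y).
Proof. by move=> Hx Hy; apply: spanD => //; apply: spanN. Qed.

Lemma span_lin (B : algType CC) P (Q : B -> Prop) (f : A -> B) :
  f 0 = 0 -> (forall x y, f (x + y) = f x + f y) -> (forall c x, f (c *: x) = c *: f x) ->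
  (forall x, P x -> span Q (f x)) -> forall x, span P x -> span Q (f x).
Proof.
move=> f0 fD fZ H x; elim=> [|y /H //|y z _ Hy _ Hz|c y _ Hy].
- by rewrite f0; apply: span0.
- by rewrite fD; apply: spanD.
- by rewrite fZ; apply: spanZ.
Qed.

Lemma span_mul2 P P' Q :
  (forall x y, P x -> P' y -> span Q (x * y)) ->
  forall x y, span P x -> span P' y -> span Q (x * y).
Proof.
move=> H x y Hx Hy.
have H1 : forall x, P x -> span Q (x * y).
  move=> x' Px'; apply: (@span_lin A P' Q (fun y => x' * y)) => //.
  - by rewrite mulr0.
  - by move=> u v; rewrite mulrDr.
  - by move=> c u; rewrite scalerAr.
  by move=> u Pu; apply: H.
apply: (@span_lin A P Q (fun x => x * y)) => //.
- by rewrite mul0r.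
- by move=> u v; rewrite mulrDl.
- by move=> c u; rewrite scalerAl.
Qed.

End SpanLemmas.

Section Filtration.
Variable A : algType CC.
Local Notation G := (@NCfil A).
Local Notation M := (@Mser A).
Local Notation L := (@Lser A).
Implicit Types a x y l s : A.

Lemma G_eq i j x : i = j -> G i x -> G j x.
Proof. by move=> ->. Qed.

Lemma Gspan0 k : G k 0. Proof. exact: span0. Qed.
Lemma GD k x y : G k x -> G k y -> G k (x + y). Proof. exact: spanD. Qed.
Lemma GB k x y : G k x -> G k y -> G k (x - y). Proof. exact: spanB. Qed.
Lemma GZ k c x : G k x -> G k (c *: x). Proof. exact: spanZ. Qed.

Lemma sumn_ge (s : seq (nat * A)) : all (fun p => 0 < p.1)%N s -> (size s <= sumn (map fst s))%N.
Proof. by elim: s => //= p s IH /andP[H1 H2]; have := IH H2; lia. Qed.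

Lemma G_gen k (s : seq (nat * A)) :
  (0 < size s)%N -> all (fun p => 0 < p.1)%N s -> sumn (map fst s) = (k + size s)%N ->
  (forall p, p \in s -> M p.1 p.2) -> G k (\prod_(p <- s) p.2).
Proof. by move=> *; apply: span_base; exists s. Qed.

Lemma G_mul i j x y : G i x -> G j y -> G (i + j) (x * y).
Proof.
apply: span_mul2 => _ _ [s1 [H1 [H2 [H3 [H4 ->]]]]] [s2 [K1 [K2 [K3 [K4 ->]]]]].
apply: span_base; exists (s1 ++ s2); split; first by rewrite size_cat; lia.
split; first by rewrite all_cat H2 K2.
split; first by rewrite map_cat sumn_cat size_cat H3 K3; lia.
split; first by move=> p; rewrite mem_cat => /orP[/H4|/K4].
by rewrite big_cat.
Qed.

Lemma M_G i x : (0 < i)%N -> M i x -> G i.-1 x.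
Proof.
move=> Hi Hx; apply: span_base; exists [:: (i, x)]; split => //.
split; first by rewrite /= Hi.
split; first by rewrite /=; lia.
split; first by move=> p; rewrite inE => /eqP ->.
by rewrite big_seq1.
Qed.

Lemma G0 x : G 0 x.
Proof.
apply: (@M_G 1) => //; apply: span_base; exists 1, x, 1; split => //.
by rewrite mul1r mulr1.
Qed.

Lemma G_ideal_l k a x : G k x -> G k (a * x).
Proof. by move=> H; apply: (@G_eq (0 + k)) => //; apply: G_mul => //; apply: G0. Qed.

Lemma G_ideal_r k a x : G k x -> G k (x * a).
Proof. by move=> H; apply: (@G_eq (k + 0)); [lia|]; apply: G_mul => //; apply: G0. Qed.

Lemma L2_ad a l : L 2 (ad a l).
Proof. by apply: span_base; exists a, l. Qed.

Lemma L_step i a l : (0 < i)%N -> L i l -> L i.+1 (ad a l).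
Proof. by case: i => // i _ H; apply: span_base; exists a, l. Qed.

Lemma M_mk i x l y : L i l -> M i (x * l * y).
Proof. by move=> H; apply: span_base; exists x, l, y. Qed.

Lemma G1_ad a x : G 1 (ad a x).
Proof. apply: (@M_G 2) => //; have -> : ad a x = 1 * ad a x * 1 by rewrite mul1r mulr1.
apply: M_mk; exact: L2_ad. Qed.

Lemma tele (u v w z : A) : (u - v) + (v - w) + (w - z) = u - z.
Proof. by rewrite !subrKA. Qed.

Lemma tele2 (u v w : A) : (u - v) + (v - w) = u - w.
Proof. by rewrite subrKA. Qed.

Lemma ad_mul3 a x l y :
  ad a (x * l * y) = ad a x * (l * y) + x * ad a l * y + x * l * ad a y.
Proof.
by rewrite /ad !(mulrBl, mulrBr) !mulrA tele.
Qed.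

Lemma Mser_ad i a x : (0 < i)%N -> M i x -> G i (ad a x).
Proof.
move=> Hi; apply: (@span_lin A A _ _ (ad a)).
- exact: ad0.
- exact: adD.
- by move=> c u; rewrite /ad scalerBr -scalerAr -scalerAl.
move=> _ [x' [l [y [Hl ->]]]].
rewrite ad_mul3; apply: GD; first apply: GD.
- apply: (@G_eq (1 + i.-1)); first lia.
  apply: G_mul; first exact: G1_ad.
  apply: M_G => //; have -> : l * y = 1 * l * y by rewrite mul1r.
  exact: M_mk.
- by apply: (@M_G i.+1) => //; apply: M_mk; apply: L_step.
- apply: (@G_eq (i.-1 + 1)); first lia.
  apply: G_mul; last exact: G1_ad.
  by apply: M_G => //; rewrite -[x' * l]mulr1; apply: M_mk.
Qed.

Lemma G_ad k a x : G k x -> G k.+1 (ad a x).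
Proof.
apply: (@span_lin A _ _ _ (ad a)).
- exact: ad0.
- exact: adD.
- by move=> c u; rewrite /ad scalerBr -scalerAr -scalerAl.
move=> _ [s [H1 [H2 [H3 [H4 ->]]]]].
elim: s k H1 H2 H3 H4 => // p s IH k _ /= /andP[Hp Hall] Hsum Hin.
rewrite big_cons.
have Mp : M p.1 p.2 by apply: Hin; rewrite inE eqxx.
have Hin' : forall q, q \in s -> M q.1 q.2 by move=> q Hq; apply: Hin; rewrite inE Hq orbT.
clear Hin; case: s IH Hall Hsum Hin' => [|q s] IH Hall Hsum Hin'.
  rewrite big_nil mulr1; apply: (@G_eq p.1); first by move: Hsum => /=; lia.
  exact: Mser_ad.
have Hge := sumn_ge Hall.
set k' := (sumn (map fst (q :: s)) - size (q :: s))%N.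
have Hk' : sumn (map fst (q :: s)) = (k' + size (q :: s))%N by rewrite /k'; lia.
have HP := G_gen (erefl _ : (0 < size (q :: s))%N) Hall Hk' Hin'.
have HIH := IH k' (erefl _) Hall Hk' Hin'.
have -> : ad a (p.2 * \prod_(j <- q :: s) j.2) =
          ad a p.2 * \prod_(j <- q :: s) j.2 + p.2 * ad a (\prod_(j <- q :: s) j.2).
  by rewrite /ad !(mulrBl, mulrBr) !mulrA tele2.
apply: GD.
  apply: (@G_eq (p.1 + k')); first by move: Hsum Hk' => /=; lia.
  by apply: G_mul => //; apply: Mser_ad.
apply: (@G_eq (p.1.-1 + k'.+1)); first by move: Hsum Hk' => /=; lia.
by apply: G_mul => //; apply: M_G.
Qed.

Lemma iter_ad_G j a x : G j (iter j (ad a) x).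
Proof. by elim: j => [|j IH] /=; [apply: G0 | apply: G_ad]. Qed.

Lemma M2_G1 x : M 2 x -> G 1 x.
Proof. exact: (@M_G 2). Qed.

Lemma Dr_G k s n x : G k x -> G k (Dr s n x).
Proof.
elim: n x => [|n IH] x Hx /=; first exact: Gspan0.
apply: GB; first exact: G_ideal_r.
apply: IH; rewrite /ad; apply: GB; [exact: G_ideal_l|exact: G_ideal_r].
Qed.

Lemma Dr_lin s n : (forall x y, Dr s n (x + y) = Dr s n x + Dr s n y) /\
   (forall c x, Dr s n (c *: x) = c *: Dr s n x).
Proof.
elim: n => [|n [IH1 IH2]] /=; first by split => *; rewrite ?addr0 ?scaler0.
split.
  move=> x y; rewrite mulrDl adD IH1 opprD.
  rewrite -!addrA; congr (_ + _); rewrite addrCA //.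
move=> c x; rewrite scalerBr -scalerAl; congr (_ - _).
by rewrite -IH2 /ad scalerBr -scalerAr -scalerAl.
Qed.

End Filtration.

Local Open Scope quotient_scope.

Section Loc.
Variable A : algType CC.
Variables (t : A) (N : nat).
Hypothesis HN : forall x, iter N (ad t) x = 0.
Hypothesis Ht0 : forall k, t ^+ k != 0.

Local Notation T := (A * nat)%type.
Implicit Types p q r : T.
Implicit Types a b : A.

Lemma tX a i j : (i = j)%N -> a * t ^+ i = a * t ^+ j.
Proof. by move=> ->. Qed.

Lemma mulrXX a i j : a * t ^+ i * t ^+ j = a * t ^+ (i + j).
Proof. by rewrite -mulrA -exprD. Qed.

Definition eqv p q := exists k, p.1 * t ^+ (q.2 + k) = q.1 * t ^+ (p.2 + k).

Lemma eqv_refl p : eqv p p. Proof. by exists 0%N. Qed.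
Lemma eqv_sym p q : eqv p q -> eqv q p. Proof. by case=> k H; exists k. Qed.
Lemma eqv_trans p q r : eqv p q -> eqv q r -> eqv p r.
Proof.
case: p q r => [a n] [b m] [c l] [k /= H1] [j /= H2]; exists (m + k + j)%N => /=.
have E1 : a * t ^+ (l + (m + k + j)) = b * t ^+ (n + k + (l + j)).
  by rewrite (@tX a _ ((m + k) + (l + j))); [rewrite -mulrXX H1 mulrXX; apply: tX|]; lia.
have E2 : c * t ^+ (n + (m + k + j)) = b * t ^+ (l + j + (n + k)).
  by rewrite (@tX c _ ((m + j) + (n + k))); [rewrite -mulrXX -H2 mulrXX; apply: tX|]; lia.
by rewrite E1 E2; apply: tX; lia.
Qed.

Definition eqvb p q : bool := if excluded_middle_informative (eqv p q) then true else false.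
Lemma eqvbP p q : reflect (eqv p q) (eqvb p q).
Proof. by rewrite /eqvb; case: excluded_middle_informative => H; constructor. Qed.

Lemma eqvb_refl : reflexive eqvb. Proof. by move=> p; apply/eqvbP/eqv_refl. Qed.
Lemma eqvb_sym : symmetric eqvb.
Proof. by move=> p q; apply/eqvbP/eqvbP => /eqv_sym. Qed.
Lemma eqvb_trans : transitive eqvb.
Proof. by move=> q p r /eqvbP H1 /eqvbP H2; apply/eqvbP; apply: eqv_trans H2. Qed.

Canonical eqvb_equiv := EquivRel eqvb eqvb_refl eqvb_sym eqvb_trans.

Definition LB : Type :=
  (fun (_ : forall x, iter N (ad t) x = 0) (_ : forall k, t ^+ k != 0) => {eq_quot eqvb}) HN Ht0.
HB.instance Definition _ : EqQuotient _ eqvb LB := EqQuotient.on LB.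
HB.instance Definition _ := Choice.on LB.

Definition pi (p : T) : LB := \pi_LB p.

Lemma piP p q : eqv p q -> pi p = pi q.
Proof. by move=> H; apply/eqmodP/eqvbP. Qed.

Lemma piP' p q : pi p = pi q -> eqv p q.
Proof. by move=> H; apply/eqvbP; apply/eqmodP. Qed.

Lemma repr_pi p : eqv (repr (pi p)) p.
Proof. by apply: piP'; rewrite /pi reprK. Qed.

Lemma piW (P : LB -> Prop) : (forall p, P (pi p)) -> forall z : LB, P z.
Proof. by move=> H z; rewrite -(reprK z); apply: H. Qed.

Definition addT p q : T := (p.1 * t ^+ q.2 + q.1 * t ^+ p.2, (p.2 + q.2)%N).
Definition oppT p : T := (- p.1, p.2).
Definition scaleT (c : CC) p : T := (c *: p.1, p.2).
Definition actT a p : T := (a * p.1, p.2).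
Definition ellT p : T := (Dr t N p.1, (p.2 + N)%N).

Lemma addTC p q : addT p q = addT q p.
Proof. by rewrite /addT addrC addnC. Qed.

Lemma addT_compat p p' q : eqv p p' -> eqv (addT p q) (addT p' q).
Proof.
case: p p' q => [a n] [a' n'] [b m] [k /= H]; exists k => /=.
rewrite !mulrDl !mulrXX; congr (_ + _); last by apply: tX; lia.
rewrite (@tX a _ ((n' + k) + (m + m))); last by lia.
rewrite -mulrXX H mulrXX; apply: tX; lia.
Qed.

Lemma oppT_compat p p' : eqv p p' -> eqv (oppT p) (oppT p').
Proof. by case=> k H; exists k; rewrite /= !mulNr H. Qed.

Lemma scaleT_compat c p p' : eqv p p' -> eqv (scaleT c p) (scaleT c p').
Proof. by case=> k H; exists k; rewrite /= -!scalerAl H. Qed.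

Lemma actT_compat a p p' : eqv p p' -> eqv (actT a p) (actT a p').
Proof. by case=> k H; exists k; rewrite /= -!mulrA H. Qed.

Lemma Dr_t x : x * t ^+ N = t * Dr t N x.
Proof. exact: Dr_spec. Qed.

Lemma t_cancel x y : t * x = t * y -> x * t ^+ N = y * t ^+ N.
Proof.
move=> H; apply/eqP; rewrite -subr_eq0 -mulrBl; apply/eqP.
by apply: rev_spec; [rewrite mulrBr H subrr|].
Qed.

Lemma ellT_compat p p' : eqv p p' -> eqv (ellT p) (ellT p').
Proof.
case: p p' => [a n] [a' n'] [k /= H]; exists (k + N)%N => /=.
rewrite (@tX (Dr t N a) _ ((n' + k + N) + N)); last by lia.
rewrite (@tX (Dr t N a') _ ((n + k + N) + N)); last by lia.
rewrite -[Dr t N a * _]mulrXX -[Dr t N a' * _]mulrXX; apply: t_cancel.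
rewrite !mulrA -!Dr_t !mulrXX.
rewrite (@tX a _ ((n' + k) + (N + N))); last by lia.
rewrite (@tX a' _ ((n + k) + (N + N))); last by lia.
by rewrite -[a * _]mulrXX -[a' * _]mulrXX H.
Qed.

Fact lkey : unit. Proof. exact: tt. Qed.
Definition addB := locked_with lkey (fun x y : LB => pi (addT (repr x) (repr y))).
Definition oppB := locked_with lkey (fun x : LB => pi (oppT (repr x))).
Definition zeroB : LB := pi (0, 0%N).
Definition scaleB := locked_with lkey (fun c (x : LB) => pi (scaleT c (repr x))).
Definition actB := locked_with lkey (fun a (x : LB) => pi (actT a (repr x))).
Definition ellB := locked_with lkey (fun x : LB => pi (ellT (repr x))).

Lemma addBE p q : addB (pi p) (pi q) = pi (addT p q).
Proof.
rewrite [addB]unlock; apply: piP; apply: eqv_trans (addT_compat _ (repr_pi p)) _.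
rewrite addTC [addT p _]addTC; exact: addT_compat (repr_pi q).
Qed.
Lemma oppBE p : oppB (pi p) = pi (oppT p).
Proof. by rewrite [oppB]unlock; apply: piP; apply: oppT_compat; apply: repr_pi. Qed.
Lemma scaleBE c p : scaleB c (pi p) = pi (scaleT c p).
Proof. by rewrite [scaleB]unlock; apply: piP; apply: scaleT_compat; apply: repr_pi. Qed.
Lemma actBE a p : actB a (pi p) = pi (actT a p).
Proof. by rewrite [actB]unlock; apply: piP; apply: actT_compat; apply: repr_pi. Qed.
Lemma ellBE p : ellB (pi p) = pi (ellT p).
Proof. by rewrite [ellB]unlock; apply: piP; apply: ellT_compat; apply: repr_pi. Qed.

Lemma pi0 n : pi (0, n) = zeroB.
Proof. by apply: piP; exists 0%N; rewrite /= !mul0r. Qed.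

Lemma addBA : associative addB.
Proof.
elim/piW => -[a n]; elim/piW => -[b m]; elim/piW => -[c l].
rewrite !addBE; congr pi; rewrite /addT /= addnA; congr pair.
rewrite !mulrDl !mulrXX -addrA; congr (_ + _).
by congr (_ + _); apply: tX; lia.
Qed.

Lemma addBC : commutative addB.
Proof. by elim/piW => p; elim/piW => q; rewrite !addBE addTC. Qed.

Lemma add0B : left_id zeroB addB.
Proof.
elim/piW => -[a n]; rewrite /zeroB addBE /addT /=.
by rewrite mul0r add0r expr0 mulr1 add0n.
Qed.

Lemma addNB : left_inverse zeroB oppB addB.
Proof.
elim/piW => -[a n]; rewrite oppBE addBE /addT /oppT /= mulNr addNr.
exact: pi0.
Qed.

HB.instance Definition _ := GRing.isZmodule.Build LB addBA addBC add0B addNB.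

Lemma addE (x y : LB) : x + y = addB x y. Proof. by []. Qed.
Lemma zeroE : (0 : LB) = zeroB. Proof. by []. Qed.
Lemma oppE (x : LB) : - x = oppB x. Proof. by []. Qed.

Lemma scaleBA c d x : scaleB c (scaleB d x) = scaleB (c * d) x.
Proof. by elim/piW: x => -[a n]; rewrite !scaleBE /scaleT /= scalerA. Qed.
Lemma scale1B : left_id 1 scaleB.
Proof. by elim/piW => -[a n]; rewrite !scaleBE /scaleT /= scale1r. Qed.
Lemma scaleBDr : right_distributive scaleB +%R.
Proof.
move=> c; elim/piW => -[a n]; elim/piW => -[b m].
by rewrite !addE !addBE !scaleBE addBE /scaleT /addT /= scalerDr !scalerAl.
Qed.
Lemma scaleBDl x : {morph scaleB^~ x : c d / c + d}.
Proof.
elim/piW: x => -[a n] c d; rewrite addE !scaleBE addBE.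
apply: piP; exists 0%N; rewrite /scaleT /addT /= -!mulrXX -mulrDl.
by rewrite scalerDl.
Qed.

HB.instance Definition _ := GRing.Zmodule_isLmodule.Build CC LB scaleBA scale1B scaleBDr scaleBDl.

Lemma scaleE c (x : LB) : c *: x = scaleB c x. Proof. by []. Qed.

Lemma actBD a (x y : LB) : actB a (x + y) = actB a x + actB a y.
Proof.
elim/piW: x => -[b n]; elim/piW: y => -[c m].
by rewrite !addE !addBE !actBE addBE /actT /addT /= mulrDr !mulrA.
Qed.

Lemma actBDl a b (x : LB) : actB (a + b) x = actB a x + actB b x.
Proof.
elim/piW: x => -[c n]; rewrite addE !actBE addBE; apply: piP; exists 0%N.
by rewrite /actT /addT /= !addn0 exprD mulrA !mulrDl.
Qed.

Lemma actBM a b (x : LB) : actB (a * b) x = actB a (actB b x).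
Proof. by elim/piW: x => -[c n]; rewrite !actBE /actT /= mulrA. Qed.

Lemma actB1 (x : LB) : actB 1 x = x.
Proof. by elim/piW: x => -[c n]; rewrite !actBE /actT /= mul1r. Qed.

Lemma actB0 (x : LB) : actB 0 x = 0.
Proof. by elim/piW: x => -[c n]; rewrite actBE /actT /= mul0r pi0. Qed.

Lemma actBZ a c (x : LB) : actB a (c *: x) = c *: actB a x.
Proof. by elim/piW: x => -[b n]; rewrite !scaleE scaleBE !actBE scaleBE /actT /scaleT /= scalerAr. Qed.

Lemma actBZl a c (x : LB) : actB (c *: a) x = c *: actB a x.
Proof. by elim/piW: x => -[b n]; rewrite !scaleE !actBE scaleBE /actT /scaleT /= scalerAl. Qed.

Lemma act_ell (x : LB) : actB t (ellB x) = x.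
Proof.
elim/piW: x => -[a n]; rewrite ellBE actBE; apply: piP; exists 0%N.
by rewrite /actT /ellT /= -Dr_t mulrXX; apply: tX; lia.
Qed.

Lemma ell_act (x : LB) : ellB (actB t x) = x.
Proof.
elim/piW: x => -[a n]; rewrite actBE ellBE; apply: piP; exists N => /=.
rewrite -!mulrXX; apply: t_cancel; rewrite !mulrA -Dr_t !mulrXX.
by apply: tX; lia.
Qed.

Lemma act_inj a (x y : LB) : actB t x = actB t y -> x = y.
Proof. by move=> H; rewrite -(ell_act x) -(ell_act y) H. Qed.

Lemma ellD (x y : LB) : ellB (x + y) = ellB x + ellB y.
Proof. by apply: (act_inj t); rewrite actBD !act_ell. Qed.

Lemma ellZ c (x : LB) : ellB (c *: x) = c *: ellB x.
Proof. by apply: (act_inj t); rewrite actBZ !act_ell. Qed.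

Lemma ell0 : ellB 0 = 0.
Proof.
have D0 : forall n, Dr t n 0 = 0.
  by elim=> //= n IH; rewrite ad0 IH mul0r subrr.
by rewrite zeroE /zeroB ellBE /ellT /= D0 pi0.
Qed.

Lemma iter_ellD n (x y : LB) : iter n ellB (x + y) = iter n ellB x + iter n ellB y.
Proof. by elim: n => //= n ->; rewrite ellD. Qed.
Lemma iter_ellZ n c (x : LB) : iter n ellB (c *: x) = c *: iter n ellB x.
Proof. by elim: n => //= n ->; rewrite ellZ. Qed.

Lemma act_tX_ell n (x : LB) : actB (t ^+ n) (iter n ellB x) = x.
Proof.
elim: n x => [|n IH] x; first by rewrite expr0 actB1.
by rewrite exprS actBM iterSr IH act_ell.
Qed.

Lemma ell_act_gen b (x : LB) : ellB (actB b x) = actB (Dr t N b) (iter N ellB x).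
Proof.
apply: (act_inj t); rewrite act_ell -actBM -Dr_t actBM act_tX_ell //.
Qed.

Lemma iter_ell_act n b (x : LB) :
  iter n ellB (actB b x) = actB (iter n (Dr t N) b) (iter (n * N) ellB x).
Proof.
elim: n b x => [|n IH] b x //=.
by rewrite IH ell_act_gen -iterD mulSn.
Qed.


Definition oneB : LB := pi (1, 0%N).

Lemma ell_act_tX n (x : LB) : iter n ellB (actB (t ^+ n) x) = x.
Proof.
elim: n x => [|n IH] x; first by rewrite expr0 actB1.
by rewrite exprSr actBM iterS IH ell_act.
Qed.

Lemma pi_frac a n : pi (a, n) = actB a (iter n ellB oneB).
Proof.
have -> : iter n ellB oneB = pi (1, n).
  rewrite -[pi (1, n)](ell_act_tX n) actBE /actT /= mulr1; congr iter.
  by apply: piP; exists 0%N; rewrite /= mul1r addn0 expr0 mulr1.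
by rewrite actBE /actT /= mulr1.
Qed.

Definition mulB (x y : LB) : LB := actB (repr x).1 (iter (repr x).2 ellB y).

Lemma mul_welldef p q (y : LB) : eqv p q ->
  actB p.1 (iter p.2 ellB y) = actB q.1 (iter q.2 ellB y).
Proof.
case=> k H.
transitivity (actB (p.1 * t ^+ (q.2 + k)) (iter (q.2 + k + p.2) ellB y)).
  by rewrite actBM iterD act_tX_ell.
transitivity (actB (q.1 * t ^+ (p.2 + k)) (iter (p.2 + k + q.2) ellB y)).
  by rewrite H; congr actB; congr iter; lia.
by rewrite actBM iterD act_tX_ell.
Qed.

Lemma mulE p (y : LB) : mulB (pi p) y = actB p.1 (iter p.2 ellB y).
Proof. by apply: mul_welldef; apply: repr_pi. Qed.

Lemma mul_pi_pi a n b m :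
  mulB (pi (a, n)) (pi (b, m)) = pi (a * iter n (Dr t N) b, (n * N + m)%N).
Proof.
rewrite mulE /= [pi (b, m)]pi_frac iter_ell_act -actBM -iterD.
by rewrite [RHS]pi_frac.
Qed.

Lemma mulBA : associative mulB.
Proof.
elim/piW => -[a n]; elim/piW => -[b m] z.
rewrite mul_pi_pi !mulE /= iter_ell_act -actBM -iterD //.
Qed.

Lemma mul1B : left_id oneB mulB.
Proof. by move=> y; rewrite /oneB mulE /= actB1. Qed.

Lemma mulB1 : right_id oneB mulB.
Proof. by elim/piW => -[a n]; rewrite mulE /= -pi_frac. Qed.

Lemma mulBDl : left_distributive mulB +%R.
Proof.
elim/piW => -[a n]; elim/piW => -[b m] z.
rewrite addE addBE !mulE /addT /= actBDl !actBM.
have E1 : iter (n + m) ellB z = iter m ellB (iter n ellB z) by rewrite -iterD addnC.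
have E2 : iter (n + m) ellB z = iter n ellB (iter m ellB z) by rewrite -iterD.
by rewrite {1}E1 E2 !act_tX_ell.
Qed.

Lemma mulBDr : right_distributive mulB +%R.
Proof.
elim/piW => -[a n] y z.
by rewrite !mulE /= iter_ellD actBD.
Qed.

Lemma oneB_neq0 : oneB != 0.
Proof.
apply/eqP => /piP' [k /=]; rewrite mul1r mul0r => H.
by move: (Ht0 (0 + k)%N); rewrite H eqxx.
Qed.

HB.instance Definition _ :=
  GRing.Zmodule_isNzRing.Build LB mulBA mul1B mulB1 mulBDl mulBDr oneB_neq0.

Lemma mulBE (x y : LB) : x * y = mulB x y. Proof. by []. Qed.
Lemma oneBE : (1 : LB) = oneB. Proof. by []. Qed.

Lemma scaleAlB c (x y : LB) : c *: (x * y) = (c *: x) * y.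
Proof.
elim/piW: x => -[a n]; rewrite !mulBE !scaleE scaleBE !mulE /scaleT /=.
by rewrite actBZl.
Qed.

HB.instance Definition _ := GRing.Lmodule_isLalgebra.Build CC LB scaleAlB.

Lemma scaleArB c (x y : LB) : c *: (x * y) = x * (c *: y).
Proof.
elim/piW: x => -[a n]; rewrite !mulBE !mulE /=.
by rewrite iter_ellZ actBZ.
Qed.

HB.instance Definition _ := GRing.Lalgebra_isAlgebra.Build CC LB scaleArB.

End Loc.

Local Close Scope quotient_scope.

Section Loc2.
Variable A : algType CC.
Variables (t : A) (N : nat).
Hypothesis HN : forall x, iter N (ad t) x = 0.
Hypothesis Ht0 : forall k, t ^+ k != 0.
Local Notation B := (LB HN Ht0).
Local Notation pi := (pi HN Ht0).
Local Notation ellB := (@ellB A t N HN Ht0).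
Local Notation oneB := (@oneB A t N HN Ht0).

Definition phiB (a : A) : B := pi (a, 0%N).

Lemma phiB_zmod : zmod_morphism phiB.
Proof.
move=> a b; rewrite /phiB addE oppE oppBE addBE /addT /oppT /=.
by rewrite !expr0 !mulr1.
Qed.

Lemma phiB_monoid : monoid_morphism phiB.
Proof.
split => // a b; rewrite /phiB mulBE mul_pi_pi /=.
by rewrite mul0n.
Qed.

Lemma phiB_scalable : scalable phiB.
Proof. by move=> c a; rewrite /phiB scaleE scaleBE. Qed.

HB.instance Definition _ := GRing.isZmodMorphism.Build A B phiB phiB_zmod.
HB.instance Definition _ := GRing.isMonoidMorphism.Build A B phiB phiB_monoid.
HB.instance Definition _ := GRing.isScalable.Build CC A B *:%R phiB phiB_scalable.

Definition Tinv : B := pi (1, 1%N).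

Lemma phiB_act a (x : B) : phiB a * x = actB a x.
Proof. by rewrite mulBE /phiB mulE. Qed.

Lemma t_Tinv : phiB t * Tinv = 1.
Proof.
rewrite phiB_act /Tinv actBE /actT /= mulr1 oneBE; apply: piP.
by exists 0%N; rewrite /= !addn0 expr0 expr1 mul1r mulr1.
Qed.

Lemma Tinv_t : Tinv * phiB t = 1.
Proof.
rewrite mulBE /Tinv mulE /= actB1.
have -> : phiB t = actB t 1 by rewrite -phiB_act mulr1.
by rewrite ell_act.
Qed.

Lemma TinvX n : Tinv ^+ n = iter n ellB 1.
Proof.
elim: n => [|n IH]; first by rewrite expr0.
by rewrite exprS IH mulBE /Tinv mulE /= actB1.
Qed.

Lemma pi_phi a n : pi (a, n) = phiB a * Tinv ^+ n.
Proof. by rewrite TinvX phiB_act oneBE -pi_frac. Qed.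

Lemma piW2 (P : B -> Prop) : (forall a n, P (phiB a * Tinv ^+ n)) -> forall x, P x.
Proof. by move=> H; elim/piW => -[a n]; rewrite pi_phi. Qed.

Section Univ.
Variables (C : algType CC) (f : {lrmorphism A -> C}) (u : C).
Hypotheses (hu1 : f t * u = 1) (hu2 : u * f t = 1).

Lemma comm_vu i j : f t ^+ i * u ^+ j = u ^+ j * f t ^+ i.
Proof. by apply: commrX; apply/esym; apply: commrX; rewrite /GRing.comm hu1 hu2. Qed.

Lemma vXuX i : f t ^+ i * u ^+ i = 1.
Proof.
elim: i => [|i IH]; first by rewrite !expr0 mulr1.
by rewrite exprS exprSr mulrA -(mulrA (f t)) IH mulr1 hu1.
Qed.

Lemma uXvX i : u ^+ i * f t ^+ i = 1.
Proof. by rewrite -comm_vu vXuX. Qed.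

Definition gB : B -> C :=
  (fun (_ : f t * u = 1) (_ : u * f t = 1) (x : B) => f (repr x).1 * u ^+ (repr x).2) hu1 hu2.

Lemma g_welldef p q : eqv t p q -> f p.1 * u ^+ p.2 = f q.1 * u ^+ q.2.
Proof.
case=> k H.
have H' : f p.1 * f t ^+ (q.2 + k) = f q.1 * f t ^+ (p.2 + k).
  by rewrite -!rmorphXn -!rmorphM H.
transitivity (f p.1 * f t ^+ (q.2 + k) * u ^+ (q.2 + k) * u ^+ p.2).
  by rewrite -(mulrA (f p.1)) vXuX mulr1.
rewrite H' -!mulrA -exprD; congr (_ * _).
rewrite (_ : (q.2 + k + p.2 = (p.2 + k) + q.2)%N); last by lia.
by rewrite [u ^+ _]exprD mulrA vXuX mul1r.
Qed.

Lemma gE p : gB (pi p) = f p.1 * u ^+ p.2.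
Proof. by apply: g_welldef; apply: repr_pi. Qed.

Lemma gB_zmod : zmod_morphism gB.
Proof.
elim/piW => -[a n]; elim/piW => -[b m].
rewrite addE oppE oppBE addBE !gE /addT /oppT /=.
rewrite rmorphD !rmorphM rmorphN !rmorphXn mulrDl mulNr mulNr.
congr (_ - _).
  by rewrite addnC exprD mulrA -(mulrA (f a)) vXuX mulr1.
by rewrite exprD mulrA -(mulrA (f b)) vXuX mulr1.
Qed.

Lemma fD n b : f (iter n (Dr t N) b) * u ^+ (n * N) = u ^+ n * f b.
Proof.
elim: n b => [|n IH] b; first by rewrite mul0n !expr0 mulr1 mul1r.
rewrite iterSr mulSn addnC exprD mulrA IH -mulrA exprSr -mulrA; congr (_ * _).
have E : f t * f (Dr t N b) = f b * f t ^+ N by rewrite -rmorphXn -!rmorphM Dr_t.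
by rewrite -[f (Dr t N b)]mul1r -hu2 -(mulrA u) E -!mulrA vXuX mulr1.
Qed.

Lemma gB_monoid : monoid_morphism gB.
Proof.
split; first by rewrite oneBE /oneB gE /= rmorph1 mulr1.
elim/piW => -[a n]; elim/piW => -[b m].
rewrite mulBE mul_pi_pi !gE /= rmorphM exprD -!mulrA; congr (_ * _).
by rewrite mulrA fD mulrA.
Qed.

Lemma gB_scalable : scalable gB.
Proof.
move=> c; elim/piW => -[a n].
by rewrite scaleE scaleBE !gE /scaleT /= linearZ /= scalerAl.
Qed.

HB.instance Definition _ := GRing.isZmodMorphism.Build B C gB gB_zmod.
HB.instance Definition _ := GRing.isMonoidMorphism.Build B C gB gB_monoid.
HB.instance Definition _ := GRing.isScalable.Build CC B C *:%R gB gB_scalable.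

Lemma gB_phi a : gB (phiB a) = f a.
Proof. by rewrite /phiB gE /= mulr1. Qed.

End Univ.

Lemma inv_unique (C : pzRingType) (v w1 w2 : C) :
  w1 * v = 1 -> v * w2 = 1 -> w1 = w2.
Proof. by move=> H1 H2; rewrite -[w1]mulr1 -H2 mulrA H1 mul1r. Qed.

Lemma univ_t (C : algType CC) (f : {lrmorphism A -> C}) :
  invertible (f t) ->
  (exists g : {lrmorphism B -> C}, forall a, g (phiB a) = f a) /\
  (forall g1 g2 : {lrmorphism B -> C},
      (forall a, g1 (phiB a) = f a) -> (forall a, g2 (phiB a) = f a) ->
      forall b, g1 b = g2 b).
Proof.
case=> u [hu1 hu2]; split; first by exists (gB hu1 hu2); apply: gB_phi.
move=> g1 g2 H1 H2; elim/piW2 => a n.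
rewrite !rmorphM !rmorphXn.
have E1 : g1 (phiB a) = f a by exact: H1.
have E2 : g2 (phiB a) = f a by exact: H2.
have F1 : g1 Tinv * f t = 1.
  by rewrite -[f t]H1 -rmorphM Tinv_t rmorph1.
have F2 : f t * g2 Tinv = 1.
  by rewrite -[f t]H2 -rmorphM t_Tinv rmorph1.
have E : g1 Tinv = g2 Tinv by apply: (inv_unique F1 F2).
congr (_ * _ ^+ _); [exact: (etrans E1 (esym E2)) | exact: E].
Qed.

End Loc2.

Lemma XX (R : pzRingType) (v w : R) k : v * w = 1 -> w * v = 1 ->
  v ^+ k * w ^+ k = 1 /\ w ^+ k * v ^+ k = 1.
Proof.
move=> H1 H2; elim: k => [|k [IH1 IH2]]; first by rewrite !expr0 mulr1.
split.
  by rewrite exprS exprSr mulrA -(mulrA v) IH1 mulr1 H1.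
by rewrite exprS exprSr mulrA -(mulrA w) IH2 mulr1 H2.
Qed.

Lemma tele2' (R : zmodType) (u v w : R) : (u - v) + (v - w) = u - w.
Proof. by rewrite subrKA. Qed.

Lemma geo (R : pzRingType) (e : R) n :
  (1 - e) * \sum_(0 <= i < n) e ^+ i = 1 - e ^+ n /\ (\sum_(0 <= i < n) e ^+ i) * (1 - e) = 1 - e ^+ n.
Proof.
elim: n => [|n [IH1 IH2]]; first by rewrite big_geq // mulr0 mul0r expr0 subrr.
rewrite big_nat_recr //=; split.
  by rewrite mulrDr IH1 mulrBl mul1r -exprS tele2'.
by rewrite mulrDl IH2 mulrBr mulr1 -exprSr tele2'.
Qed.

Section Loc3.
Variable A : algType CC.
Variables (t : A) (N : nat).
Hypothesis HN : forall x, iter N (ad t) x = 0.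
Hypothesis Ht0 : forall k, t ^+ k != 0.
Hypothesis HG : forall x : A, NCfil N x -> x = 0.
Local Notation B := (LB HN Ht0).
Local Notation pi := (pi HN Ht0).
Local Notation phiB := (@phiB A t N HN Ht0).
Local Notation Tinv := (@Tinv A t N HN Ht0).
Local Notation G := (@NCfil A).

Definition J k (x : B) := exists a n, G k a /\ x = pi (a, n).

Lemma J_eq i j x : i = j -> J i x -> J j x. Proof. by move=> ->. Qed.

Lemma J0 k : J k 0.
Proof. by exists 0, 0%N; split; [apply: span0 | rewrite zeroE]. Qed.

Lemma JD k x y : J k x -> J k y -> J k (x + y).
Proof.
move=> [a [n [Ha ->]]] [b [m [Hb ->]]]; rewrite addE addBE.
exists (a * t ^+ m + b * t ^+ n), (n + m)%N; split => //.
by apply: GD; apply: G_ideal_r.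
Qed.

Lemma JN k x : J k x -> J k (- x).
Proof.
move=> [a [n [Ha ->]]]; rewrite oppE oppBE; exists (- a), n; split => //.
by apply: spanN.
Qed.

Lemma JB k x y : J k x -> J k y -> J k (x - y).
Proof. by move=> Hx Hy; apply: JD => //; apply: JN. Qed.

Lemma JZ k c x : J k x -> J k (c *: x).
Proof.
move=> [a [n [Ha ->]]]; rewrite scaleE scaleBE; exists (c *: a), n; split => //.
exact: GZ.
Qed.

Lemma J_all x : J 0 x.
Proof. by elim/piW: x => -[a n]; exists a, n; split => //; apply: G0. Qed.

Lemma Dr_iter_G k n b : G k b -> G k (iter n (Dr t N) b).
Proof. by elim: n => //= n IH Hb; apply: Dr_G; apply: IH. Qed.

Lemma JM i j x y : J i x -> J j y -> J (i + j) (x * y).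
Proof.
move=> [a [n [Ha ->]]] [b [m [Hb ->]]]; rewrite mulBE mul_pi_pi.
exists (a * iter n (Dr t N) b), (n * N + m)%N; split => //.
by apply: G_mul => //; apply: Dr_iter_G.
Qed.

Lemma JMl k x y : J k y -> J k (x * y).
Proof. by move=> H; apply: (@J_eq (0 + k)) => //; apply: JM => //; apply: J_all. Qed.

Lemma JMr k x y : J k x -> J k (x * y).
Proof. by move=> H; apply: (@J_eq (k + 0)); [lia|]; apply: JM => //; apply: J_all. Qed.

Lemma J_phi k a : G k a -> J k (phiB a).
Proof. by move=> H; exists a, 0%N. Qed.

Lemma J_N0 x : J N x -> x = 0.
Proof. by move=> [a [n [Ha ->]]]; rewrite (HG Ha) pi0. Qed.

Lemma J_span k (P : B -> Prop) : (forall x, P x -> J k x) -> forall x, span P x -> J k x.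
Proof.
move=> H x; elim=> [|y /H //|y z _ Hy _ Hz|c y _ Hy]; first exact: J0.
  exact: JD.
exact: JZ.
Qed.

Definition cm (x y : B) := x * y - y * x.

Lemma cmMl x1 x2 u : cm (x1 * x2) u = x1 * cm x2 u + cm x1 u * x2.
Proof. by rewrite /cm mulrBr mulrBl !mulrA tele2'. Qed.

Lemma cmMr x p q : cm x (p * q) = cm x p * q + p * cm x q.
Proof. by rewrite /cm mulrBr mulrBl !mulrA tele2'. Qed.

Lemma cm1 x : cm x 1 = 0. Proof. by rewrite /cm mulr1 mul1r subrr. Qed.

Lemma cm_phi_Tinv a : J 1 (cm (phiB a) Tinv).
Proof.
have -> : cm (phiB a) Tinv = Tinv * phiB (t * a - a * t) * Tinv.
  rewrite rmorphB !rmorphM mulrBr mulrBl !mulrA Tinv_t mul1r.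
  by rewrite -!mulrA t_Tinv mulr1.
apply: JMr; apply: JMl; apply: J_phi; apply: (@G_ad A 0 t a); apply: G0.
Qed.

Lemma cm_phi_TinvX a m : J 1 (cm (phiB a) (Tinv ^+ m)).
Proof.
elim: m => [|m IH]; first by rewrite expr0 cm1; apply: J0.
by rewrite exprS cmMr; apply: JD; [apply: JMr; apply: cm_phi_Tinv | apply: JMl].
Qed.

Lemma cm_phi j a u : J j u -> J j.+1 (cm (phiB a) u).
Proof.
move=> [y [m [Hy ->]]]; rewrite pi_phi cmMr; apply: JD.
  apply: JMr; have -> : cm (phiB a) (phiB y) = phiB (ad a y).
    by rewrite /cm /ad rmorphB !rmorphM.
  by apply: J_phi; apply: G_ad.
apply: (@J_eq (j + 1)); first lia.
by apply: JM; [apply: J_phi | apply: cm_phi_TinvX].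
Qed.

Lemma cm_Tinv j u : J j u -> J j.+1 (cm Tinv u).
Proof.
move=> Hu.
have -> : cm Tinv u = - (Tinv * cm (phiB t) u * Tinv).
  rewrite /cm mulrBr mulrBl !mulrA Tinv_t mul1r -!mulrA t_Tinv mulr1.
  by rewrite opprB.
by apply: JN; apply: JMr; apply: JMl; apply: cm_phi.
Qed.

Lemma cm_J j x u : J j u -> J j.+1 (cm x u).
Proof.
move=> Hu; elim/piW2: x => a n.
rewrite cmMl; apply: JD; first by apply: JMl; elim: n => [|n IH];
  [rewrite expr0 /cm mul1r mulr1 subrr; apply: J0 | rewrite exprS cmMl; apply: JD;
   [apply: JMl | apply: JMr; apply: cm_Tinv]].
by apply: JMr; apply: cm_phi.
Qed.

Lemma L_J i x : (0 < i)%N -> Lser i x -> J i.-1 x.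
Proof.
case: i x => // i; elim: i => [|i IH] x _ Hx; first exact: J_all.
apply: (@J_span _ (fun x => exists a l, Lser i.+1 l /\ x = a * l - l * a)) => //.
move=> _ [a [l [Hl ->]]]; by apply: cm_J; apply: IH.
Qed.

Lemma M_J i x : (0 < i)%N -> Mser i x -> J i.-1 x.
Proof.
move=> Hi; apply: J_span => _ [a [l [b [Hl ->]]]].
by apply: JMr; apply: JMl; apply: L_J.
Qed.

Lemma prod_J (s : seq (nat * B)) : all (fun p => 0 < p.1)%N s ->
  (forall p, p \in s -> Mser p.1 p.2) ->
  J (sumn (map fst s) - size s) (\prod_(p <- s) p.2).
Proof.
elim: s => [|p s IH] /=; first by move=> _ _; rewrite big_nil; apply: J_all.
move=> /andP[Hp Hall] Hin; rewrite big_cons.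
have Hge : (size s <= sumn (map fst s))%N by apply: sumn_ge.
apply: (@J_eq (p.1.-1 + (sumn (map fst s) - size s))); first by case: (p.1) Hp Hge => //= k _; lia.
apply: JM; first by apply: M_J => //; apply: Hin; rewrite inE eqxx.
by apply: IH => // q Hq; apply: Hin; rewrite inE Hq orbT.
Qed.

Lemma F_J k x : NCfil k x -> J k x.
Proof.
apply: J_span => _ [s [H1 [H2 [H3 [H4 ->]]]]].
by have := prod_J H2 H4; rewrite H3 addnK.
Qed.

Lemma B_nil : NC_nilpotent B.
Proof. by exists N => x /F_J /J_N0. Qed.

Lemma J_pow e k : J 1 e -> J k (e ^+ k).
Proof.
move=> He; elim: k => [|k IH]; first exact: J_all.
by rewrite exprS; apply: (@J_eq (1 + k)) => //; apply: JM.
Qed.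

Lemma inv_S s r r' m m' n : G 1 m -> G 1 m' ->
  t ^+ n = s * r + m -> t ^+ n = r' * s + m' -> invertible (phiB s).
Proof.
move=> Hm Hm' E E'.
have [TT1 TT2] := XX n (t_Tinv HN Ht0) (Tinv_t HN Ht0).
set e := phiB m * Tinv ^+ n.
set e' := Tinv ^+ n * phiB m'.
have He : e ^+ N = 0 by apply: J_N0; apply: J_pow; apply: JMr; apply: J_phi.
have He' : e' ^+ N = 0 by apply: J_N0; apply: J_pow; apply: JMl; apply: J_phi.
have [G1 _] := geo e N.
have [_ G2] := geo e' N.
rewrite He subr0 in G1; rewrite He' subr0 in G2.
set Rr := phiB r * Tinv ^+ n * \sum_(0 <= i < N) e ^+ i.
set Ll := (\sum_(0 <= i < N) e' ^+ i) * (Tinv ^+ n * phiB r').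
have HR : phiB s * Rr = 1.
  rewrite /Rr !mulrA -rmorphM.
  have -> : s * r = t ^+ n - m by rewrite E addrK.
  by rewrite rmorphB rmorphXn mulrBl TT1.
have HL : Ll * phiB s = 1.
  rewrite /Ll -!mulrA -rmorphM.
  have -> : r' * s = t ^+ n - m' by rewrite E' addrK.
  by rewrite rmorphB rmorphXn mulrBr TT2.
exists Rr; split => //.
have -> : Rr = Ll by rewrite -[Ll]mulr1 -HR mulrA HL mul1r.
exact: HL.
Qed.

Lemma prod_nseq (x : B) n : \prod_(y <- nseq n x) y = x ^+ n.
Proof. by elim: n => [|n IH]; rewrite ?big_nil ?expr0 // /= big_cons IH exprS. Qed.

Lemma B_fin_gen : fin_gen_alg A -> fin_gen_alg B.
Proof.
move=> [gens Hg]; exists (map phiB gens ++ [:: Tinv]).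
set P := (fun y : B => exists w : seq B, {subset w <= map phiB gens ++ [:: Tinv]} /\
                                         y = \prod_(g <- w) g).
elim/piW2 => a n.
apply: (@span_lin B B P P (fun y => y * Tinv ^+ n)) => //.
- by rewrite mul0r.
- by move=> y z; rewrite mulrDl.
- by move=> c y; rewrite scalerAl.
- move=> _ [w [Hw ->]]; apply: span_base; exists (w ++ nseq n Tinv); split.
    move=> g; rewrite mem_cat => /orP[/Hw //|]; rewrite mem_nseq => /andP[_ /eqP ->].
    by rewrite mem_cat inE eqxx orbT.
  by rewrite big_cat prod_nseq.
apply: (@span_lin A B _ _ phiB) (Hg a).
- exact: rmorph0.
- by move=> y z; rewrite rmorphD.
- by move=> c y; rewrite linearZ.
move=> _ [w [Hw ->]]; apply: span_base; exists (map phiB w); split.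
  by move=> g /mapP [g' Hg' ->]; rewrite mem_cat map_f // Hw.
by rewrite rmorph_prod big_map.
Qed.

End Loc3.

Section Transfer.
Variables (B1 B2 : algType CC) (h : {lrmorphism B1 -> B2}).

Lemma span_h (P : B1 -> Prop) (Q : B2 -> Prop) :
  (forall x, P x -> span Q (h x)) -> forall x, span P x -> span Q (h x).
Proof.
apply: span_lin; [exact: rmorph0 | by move=> x y; rewrite rmorphD | by move=> c x; rewrite linearZ].
Qed.

Lemma Lser_morph k : forall l, Lser k l -> Lser k (h l).
Proof.
elim: k => [|k IH] l //; case: k IH => [|k] IH // Hl.
apply: (span_h _ Hl) => _ [a [l' [Hl' ->]]]; apply: span_base.
by exists (h a), (h l'); split; [apply: IH | rewrite rmorphB !rmorphM].
Qed.

Lemma Mser_morph k x : Mser k x -> Mser k (h x).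
Proof.
apply: span_h => _ [a [l [b [Hl ->]]]]; apply: span_base.
by exists (h a), (h l), (h b); split; [apply: Lser_morph | rewrite !rmorphM].
Qed.

Lemma NCfil_morph k x : NCfil k x -> NCfil k (h x).
Proof.
apply: span_h => _ [s [H1 [H2 [H3 [H4 ->]]]]]; apply: span_base.
exists (map (fun p => (p.1, h p.2)) s); split; first by rewrite size_map.
split; first by rewrite all_map.
split; first by rewrite size_map -map_comp.
split; first by move=> p /mapP [q Hq ->] /=; apply: Mser_morph; apply: H4.
by rewrite rmorph_prod big_map.
Qed.

End Transfer.

Lemma prod_in (Q : pzRingType) (QC : forall x y : Q, x * y = y * x) (x : Q) r :
  x \in r -> exists c, \prod_(g <- r) g = x * c.
Proof.
elim: r => // y r IH; rewrite inE big_cons => /orP[/eqP ->|Hx].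
  by exists (\prod_(g <- r) g).
have [c ->] := IH Hx; exists (y * c); by rewrite mulrA (QC y x) mulrA.
Qed.

Lemma prod_pow (Q : pzRingType) (QC : forall x y : Q, x * y = y * x) (gens w : seq Q) :
  {subset w <= gens} -> exists q, (\prod_(g <- gens) g) ^+ size w = (\prod_(g <- w) g) * q.
Proof.
elim: w => [|g w IH] Hw; first by exists 1; rewrite big_nil expr0 mulr1.
have Hw' : {subset w <= gens} by move=> x Hx; apply: Hw; rewrite inE Hx orbT.
have [q Hq] := IH Hw'.
have [c Hc] := prod_in QC (Hw g (mem_head g w)).
exists (c * q); rewrite /= exprS Hq {1}Hc big_cons -!mulrA; congr (_ * _).
by rewrite !mulrA (QC c).
Qed.

Theorem proposition2p5 (A Q : algType CC) (pi : {lrmorphism A -> Q})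
    (Sbar : Q -> Prop) :
  fin_gen_alg A ->
  NC_nilpotent A ->
  (* pi : A -> A / M_2(A) is the quotient map *)
  (forall q, exists a, pi a = q) ->
  (forall a, pi a = 0 <-> Mser 2 a) ->
  (* Sbar is a finitely generated multiplicative set *)
  (exists gens : seq Q, forall q,
      Sbar q <-> exists w : seq Q, {subset w <= gens} /\ q = \prod_(g <- w) g) ->
  (* without zero divisors *)
  (forall s q, Sbar s -> (s * q = 0 -> q = 0) /\ (q * s = 0 -> q = 0)) ->
  let S := fun a => Sbar (pi a) in
  (right_ore S /\ left_ore S) /\
  (exists (B : algType CC) (phi : {lrmorphism A -> B}), is_localization S phi) /\
  (forall (B : algType CC) (phi : {lrmorphism A -> B}),
      is_localization S phi -> fin_gen_alg B /\ NC_nilpotent B).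
Proof.
move=> Hfg [N HN0] Hsurj Hker [gens Hgens] Hzd S.
have QC : forall x y : Q, x * y = y * x.
  move=> x y; have [a <-] := Hsurj x; have [b <-] := Hsurj y.
  apply/eqP; rewrite -subr_eq0 -!rmorphM -rmorphB; apply/eqP; apply/Hker.
  apply: span_base; exists 1, (a * b - b * a), 1; split; last by rewrite mul1r mulr1.
  by apply: span_base; exists a, b.
have SbM : forall x y, Sbar x -> Sbar y -> Sbar (x * y).
  move=> x y /Hgens [w1 [H1 ->]] /Hgens [w2 [H2 ->]]; apply/Hgens.
  exists (w1 ++ w2); split; last by rewrite big_cat.
  by move=> g; rewrite mem_cat => /orP[/H1|/H2].
have Sb1 : Sbar 1 by apply/Hgens; exists [::]; rewrite big_nil.
have SbX : forall x k, Sbar x -> Sbar (x ^+ k).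
  by move=> x k Hx; elim: k => [|k IH]; [rewrite expr0 | rewrite exprS; apply: SbM].
have HadN : forall s x : A, iter N (ad s) x = 0.
  by move=> s x; apply: HN0; apply: iter_ad_G.
have HSX : forall s k, S s -> S (s ^+ k) by move=> s k Hs; rewrite /S rmorphXn; apply: SbX.
split.
  split.
    move=> a s Hs; exists (Dr s N a), (s ^+ N); split; first exact: HSX.
    exact: Dr_spec.
  move=> a s Hs; exists (Dl s N a), (s ^+ N); split; first exact: HSX.
  exact: Dl_spec.
have [t Ht] := Hsurj (\prod_(g <- gens) g).
have St : S t by rewrite /S Ht; apply/Hgens; exists gens; split.
have Ht0 : forall k, t ^+ k != 0.
  move=> k; apply/eqP => H; have := HSX t k St; rewrite /S H rmorph0 => S0.
  have [H0 _] := Hzd 0 1 S0; move: (H0 (mul0r 1)) => /eqP; by rewrite oner_eq0.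
have Hdiv : forall s, S s -> exists r m m' n, Mser 2 m /\ Mser 2 m' /\
    t ^+ n = s * r + m /\ t ^+ n = r * s + m'.
  move=> s /Hgens [w [Hw Hs]].
  have [q Hq] := prod_pow QC Hw; have [r Hr] := Hsurj q.
  exists r, (t ^+ size w - s * r), (t ^+ size w - r * s), (size w); split.
    apply/Hker.
    have E : pi (t ^+ size w - s * r) = pi t ^+ size w - pi s * pi r.
      by rewrite rmorphB rmorphXn rmorphM.
    by rewrite E Ht Hq Hs Hr subrr.
  split.
    apply/Hker.
    have E : pi (t ^+ size w - r * s) = pi t ^+ size w - pi r * pi s.
      by rewrite rmorphB rmorphXn rmorphM.
    by rewrite E Ht Hq Hs Hr QC subrr.
  by split; rewrite addrC subrK.
pose B := LB (HadN t) Ht0.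
pose phi := phiB (HadN t) Ht0.
have HinvS : forall s, S s -> invertible (phi s).
  move=> s /Hdiv [r [m [m' [n [Hm [Hm' [E E']]]]]]].
  exact: (inv_S (HadN t) Ht0 HN0 (M2_G1 Hm) (M2_G1 Hm') E E').
have Hloc : is_localization S phi.
  split => // C f Hf; apply: univ_t; exact: Hf.
split; first by exists B, phi.
move=> B' phi' [Hinv' Huniv'].
have [[h' Hh'] _] := Huniv' B phi HinvS.
have [[h Hh] _] := univ_t (HadN t) Ht0 (Hinv' t St).
have Hid : forall y, h (h' y) = y.
  have [_ U] := Huniv' B' phi' Hinv'.
  move=> y; apply: (U (h \o h') idfun) => // a /=.
  by rewrite Hh' Hh.
split.
  have [gB HgB] := B_fin_gen (HadN t) Ht0 Hfg.
  exists (map h gB) => y; rewrite -(Hid y).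
  apply: (@span_h _ _ h _ _ _ (h' y) (HgB (h' y))) => _ [w [Hw ->]]; apply: span_base.
  exists (map h w); split; last by rewrite rmorph_prod big_map.
  by move=> g /mapP [g' Hg' ->]; rewrite map_f // Hw.
have [N' HN'] := B_nil (HadN t) Ht0 HN0.
exists N' => y Hy; rewrite -(Hid y) (HN' (h' y)) ?rmorph0 //.
exact: NCfil_morph.
Qed.
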